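(* Let $G(\mathcal{M})=(R,T;E;c)$ and $G(\mathcal{M}')=(R,T;E;c')$ be two robot-task graphs where $c$ and $c'$ are injective on $E$. Let $\textsc{Auction}(\mathcal{M})=(W=(w_k),a)$, $\textsc{Auction}(\mathcal{M}')=(W'=(w'_k),a')$, and let $U=(u_k)$ denote the edges with second-best bids on $\textsc{Auction}(\mathcal{M})$. Suppose there exists some $e=w_K\in W$ such that $c'(f)=c(f)$ for all $f\in E\setminus\{e\}$. Then $\textsc{Auction}(\mathcal{M})=\textsc{Auction}(\mathcal{M}')$ if and only if $c(u_K)>c'(e)>\max_{k\in B_e\setminus\{K\}}c(w_k)$ in the case $B_e\setminus\{K\}\ne\emptyset$, and $c(u_K)>c'(e)\ge0$ otherwise.
   Context: $R$ (robots) and $T$ (tasks) are finite disjoint sets with $R\neq\emptyset$, $|R\sqcup T|\ge3$. The robot-task graph $(R,T;E;c)$ has vertex set $R\sqcup T$, edge set $E$ consisting of all 2-element subsets of $R\sqcup T$, and a non-negative edge cost $c:E\to\mathbb{R}_+$ (with $\mathbb{R}_+=[0,\infty)\cup\{\infty\}$); injective means distinct edges have distinct costs. $\textsc{Auction}$ on $(R,T;E;c)$: set $A=\emptyset$ and $a(r)=0$ for all $r\in R$. For $k=1,\dots,|T|$ (bid rounds): let $w_k=\{s,t\}$ be the edge with $s\in R\cup A$, $t\in T\setminus A$ minimising $c(\{s,t\})$; set $a(t)=k$ and $A\leftarrow A\cup\{t\}$. The output is the list $W=(w_1,\dots,w_{|T|})$ of winning edges and the assignment function $a:R\sqcup T\to\{0,\dots,|T|\}$.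 Two auction outputs are equal if they have the same list and the same assignment function. For an edge $e=\{x,y\}$, $B_e=\{k\in\mathbb{Z}:\min(a(x),a(y))<k\le\max(a(x),a(y))\}$ (computed from the output of $\textsc{Auction}(\mathcal{M})$); it is the set of bid rounds in which $e$ is considered. The edge with the second-best bid in round $k$ is the edge $u_k\ne w_k$ with $k\in B_{u_k}$ such that $c(u_k)\le c(f)$ for all edges $f\ne w_k$ with $k\in B_f$. *)

(* Defs.v *)
From HB Require Import structures.
From mathcomp Require Import all_boot all_order all_algebra.
From mathcomp Require Import reals constructive_ereal.
Set Implicit Arguments. Unset Strict Implicit. Unset Printing Implicit Defensive.
Import Order.TTheory GRing.Theory Num.Theory.
Local Open Scope ereal_scope.

(* Edges are all 2-element subsets of vertices; costs are extended reals
   (nonnegativity and injectivity are hypotheses of the theorem). *)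
Section Auction.
Variables (R : realType) (Rb Tk : finType).
Notation V := (Rb + Tk)%type.
Variable c : {set V} -> \bar R.

Definition edge (e : {set V}) : bool := (#|e| == 2)%N.

Definition candidate (A : {set Tk}) (e : {set V}) : bool :=
  edge e && [exists s : V, exists t : Tk,
    [&& e == [set s; inr t], t \notin A &
        match s with inl _ => true | inr t' => t' \in A end]].

(* the minimum-cost candidate edge (unique when costs are injective) *)
Definition winner (A : {set Tk}) : option {set V} :=
  [pick e : {set V} | candidate A e &&
     [forall f : {set V}, candidate A f ==> (c e <= c f)]].

Fixpoint auction_rec (n k : nat) (A : {set Tk}) (a : {ffun V -> nat})
  (W : seq {set V}) : seq {set V} * {ffun V -> nat} :=
  match n with
  | 0 => (W, a)
  | n'.+1 =>
    match winner A with
    | Some e =>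
      match [pick t : Tk | (t \notin A) && (inr t \in e)] with
      | Some t => auction_rec n' k.+1 (t |: A)
                   [ffun v => if v == inr t then k else a v] (rcons W e)
      | None => (W, a)
      end
    | None => (W, a)
    end
  end.

Definition auction : seq {set V} * {ffun V -> nat} :=
  auction_rec #|Tk| 1 set0 [ffun => 0%N] [::].

(* w_k (1-based) *)
Definition win (k : nat) : {set V} := nth set0 auction.1 k.-1.

(* k ∈ B_e, computed from the assignment a of Auction(M) *)
Definition inB (e : {set V}) (k : nat) : bool :=
  [exists x in e, exists y in e, (x != y) &&
     (minn (auction.2 x) (auction.2 y) < k <= maxn (auction.2 x) (auction.2 y))%N].

Definition second_best (k : nat) (u : {set V}) : Prop :=
  [/\ edge u, u != win k, inB u k &
      forall f, edge f -> f != win k -> inB f k -> c u <= c f].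

End Auction.

(* Main.v *)
Require Import Defs.
From HB Require Import structures.
From mathcomp Require Import all_boot all_order all_algebra.
From mathcomp Require Import reals constructive_ereal.
From mathcomp Require Import zify.
Import Order.TTheory GRing.Theory Num.Theory.
Local Open Scope ereal_scope.
Set Implicit Arguments. Unset Strict Implicit. Unset Printing Implicit Defensive.

Section Aux.
Variables (R : realType) (Rb Tk : finType).
Local Notation V := (Rb + Tk)%type.
Variable c : {set V} -> \bar R.

Definition state := (nat * {set Tk} * {ffun V -> nat} * seq {set V})%type.

Definition stepS (s : state) : state :=
  let: (k, A, a, W) := s in
  match winner c A with
  | Some e => match [pick t : Tk | (t \notin A) && (inr t \in e)] with
     | Some t => (k.+1, t |: A, [ffun v => if v == inr t then k else a v], rcons W e)
     | None => s end
  | None => s end.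

Lemma iter_fix (T : Type) (f : T -> T) x n : f x = x -> iter n f x = x.
Proof. by move=> H; elim: n => //= n ->. Qed.

Lemma rec_iter n k A a W : auction_rec c n k A a W =
  (let: (_, _, a', W') := iter n stepS (k, A, a, W) in (W', a')).
Proof.
elim: n k A a W => [|n IH] k A a W; first by [].
rewrite iterSr /=. case Hw: (winner c A) => [e|]; last first.
  by rewrite iter_fix // /= Hw.
case: pickP => [t Ht|Hn]; first by rewrite IH.
by rewrite iter_fix // /= Hw; case: pickP => // t; rewrite Hn.
Qed.


Lemma winnerP A w : winner c A = Some w ->
  candidate A w /\ forall f, candidate A f -> c w <= c f.
Proof.
rewrite /winner; case: pickP => // w' /andP[H1 /forallP H2] [<-]; split => // f Hf.
by have := H2 f; rewrite Hf.
Qed.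

Lemma cand_edge (A : {set Tk}) (f : {set V}) : candidate A f -> edge f.
Proof. by case/andP. Qed.

Lemma winner_uniq A w :
  (forall f g : {set V}, edge f -> edge g -> f != g -> c f != c g) ->
  candidate A w -> (forall f, candidate A f -> c w <= c f) ->
  winner c A = Some w.
Proof.
move=> hinj Hw Hm; rewrite /winner; case: pickP => [x /andP[Hx /forallP Hxm] | /(_ w)].
  congr Some; apply/eqP/negPn/negP => Hne.
  have := hinj x w (cand_edge Hx) (cand_edge Hw) Hne.
  have := Hxm w; rewrite Hw /= => H1.
  by rewrite eq_le H1 Hm.
rewrite Hw /=; move/negbT/negP; case; apply/forallP => f; apply/implyP; exact: Hm.
Qed.

Lemma cand_dec (A : {set Tk}) (e : {set V}) : candidate A e -> exists s t,
  [/\ e = [set s; inr t], t \notin A & match s with inl _ => true | inr t' => t' \in A end].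
Proof.
case/andP => _ /existsP [s /existsP [t /and3P [/eqP -> H1 H2]]].
exists s, t; split => //. by case: s H2.
Qed.

Lemma cand_task (A : {set Tk}) (e : {set V}) : candidate A e -> exists t, inr t \in e /\ t \notin A.
Proof.
move/cand_dec => [s [t [-> H1 H2]]]; exists t; split => //.
by rewrite !inE eqxx orbT.
Qed.

Hypothesis hR : (0 < #|Rb|)%N.

Lemma step_spec (k : nat) (A : {set Tk}) (a : {ffun V -> nat}) (W : seq {set V}) : (exists t, t \notin A) -> exists e t,
  [/\ winner c A = Some e, t \notin A,
   stepS (k, A, a, W) = (k.+1, t |: A, [ffun v => if v == inr t then k else a v], rcons W e) &
   forall v, v \in e -> match v with inl _ => true | inr t' => t' \in t |: A end].
Proof.
move=> [t0 Ht0].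
case/card_gt0P: hR => r0 _.
have Hc0 : candidate A [set (inl r0 : V); inr t0].
  rewrite /candidate /edge cards2 /=; apply/existsP; exists (inl r0).
  by apply/existsP; exists t0; rewrite eqxx Ht0.
have [e He] : exists e, winner c A = Some e.
  rewrite /winner; case: pickP => [e _|]; first by exists e.
  move=> Hn; exfalso.
  case: (arg_minP c Hc0) => x Hx Hm.
  have := Hn x; rewrite Hx /=; move/negbT/negP; apply; apply/forallP => f.
  by apply/implyP => Hf; apply: Hm.
have [Hce _] := winnerP He.
have [s [t [De Ht Hs]]] := cand_dec Hce.
have Hte : inr t \in e by rewrite De !inE eqxx orbT.
have Hpick : [pick t1 | (t1 \notin A) && (inr t1 \in e)] = Some t.
  case: pickP => [t1 /andP [Ht1 Ht1e] | /(_ t)]; last by rewrite Ht Hte.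
  move: Ht1e; rewrite De !inE => /orP [/eqP Hs1|/eqP [->] //].
  by move: Hs; rewrite -Hs1 (negbTE Ht1).
exists e, t; split => //; first by rewrite /= He Hpick.
move=> v; rewrite De !inE => /orP [/eqP ->|/eqP ->].
  by case: s Hs {De} => // t' Ht'; rewrite !inE Ht' orbT.
by rewrite !inE eqxx.
Qed.


Definition s0 : state := (1%N, set0, [ffun => 0%N], [::]).
Definition st j := iter j stepS s0.
Definition Aj j := (st j).1.1.2.

Lemma stepA_sub (s : state) : s.1.1.2 \subset (stepS s).1.1.2.
Proof.
case: s => [[[k A] a] W] /=.
case: (winner c A) => [e|] //; case: pickP => [t _|_] //=; exact: subsetUr.
Qed.

Lemma Aj_sub i j : (i <= j)%N -> Aj i \subset Aj j.
Proof.
move=> /subnK <-; elim: (j - i)%N => [|d IH]; first exact: subxx.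
apply: subset_trans IH _; rewrite addSn /Aj /st iterS; exact: stepA_sub.
Qed.

Local Notation n := #|Tk|.

Lemma inv j : (j <= n)%N ->
  [/\ (st j).1.1.1 = j.+1, #|Aj j| = j, size (st j).2 = j,
   (forall i, (i < j)%N -> winner c (Aj i) = Some (nth set0 (st j).2 i)) &
   [/\ (forall r, (st j).1.2 (inl r) = 0%N),
   (forall t, t \in Aj j -> (0 < (st j).1.2 (inr t))%N /\
      forall i, (i <= j)%N -> ((st j).1.2 (inr t) <= i)%N = (t \in Aj i)) &
   (forall i, (i < j)%N -> forall v, v \in nth set0 (st j).2 i ->
      match v with inl _ => true | inr t => t \in Aj i.+1 end)]].
Proof.
elim: j => [|j IH] Hj.
  split; [by []|by rewrite /Aj /= cards0|by []|by []|split].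
  - by move=> r; rewrite ffunE.
  - by move=> t; rewrite /Aj /= inE.
  - by [].
have [IH1 IH2 IH3 IH4 [IH5 IH6 IH7]] := IH (ltnW Hj).
case Es: (st j) IH1 IH3 IH4 IH5 IH6 IH7 => [[[k A] a] W] /= IH1 IH3 IH4 IH5 IH6 IH7.
have EA : Aj j = A by rewrite /Aj Es.
have [t1 Ht1] : exists t, t \notin A.
  have /subsetPn [t _ Ht] : ~~ ([set: Tk] \subset A).
    apply/negP => /subset_leq_card; rewrite cardsT -EA IH2; lia.
  by exists t.
have [e [t [He Ht Hstep Hcov]]] := step_spec k a W (ex_intro _ t1 Ht1).
have Es1 : st j.+1 = (k.+1, t |: A, [ffun v => if v == inr t then k else a v], rcons W e).
  by rewrite /st iterS -/(st j) Es Hstep.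
have EA1 : Aj j.+1 = t |: A by rewrite /Aj Es1.
rewrite Es Hstep /=; split; [| | | |split].
- by rewrite IH1.
- by rewrite EA1 cardsU1 Ht -EA IH2.
- by rewrite size_rcons IH3.
- move=> i Hi; rewrite nth_rcons IH3.
  case: ltnP => Hij; first exact: IH4.
  have -> : i = j by lia.
  by rewrite eqxx EA.
- by move=> r; rewrite ffunE /= IH5.
- move=> t'; rewrite EA1 ffunE.
  case: (eqVneq t' t) => [->|Hne] Hin.
    rewrite eqxx; split; first by rewrite IH1.
    move=> i Hi; rewrite IH1; case: (eqVneq i j.+1) => [->|Hij].
      by rewrite leqnn EA1 setU11.
    have Hij' : (i <= j)%N by lia.
    have -> : (j.+1 <= i)%N = false by lia.
    apply/esym/negbTE; apply: contra Ht => Hti.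
    by rewrite -EA; apply: (subsetP (Aj_sub Hij')).
  have -> : (inr t' == inr t :> V) = false by apply/negbTE; apply: contra Hne => /eqP [->].
  have HinA : t' \in A by move: Hin; rewrite in_setU1 (negbTE Hne).
  have HinAj : t' \in Aj j by rewrite EA.
  have [Ha1 Ha2] := IH6 t' HinAj.
  split => // i Hi; case: (eqVneq i j.+1) => [->|Hij]; last by apply: Ha2; lia.
  rewrite EA1 in_setU1 HinA orbT.
  have := Ha2 j (leqnn j); rewrite EA HinA => H; apply/idP; lia.
- move=> i Hi v; rewrite nth_rcons IH3.
  case: ltnP => Hij; first exact: IH7.
  have -> : i = j by lia.
  rewrite eqxx EA1 => Hv; exact: Hcov.
Qed.


Lemma auction_st : auction c = ((st n).2, (st n).1.2).
Proof.
rewrite /auction rec_iter; change (iter n stepS (1%N, set0, [ffun => 0%N], [::])) with (st n).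
by case: (st n) => [[[? ?] ?] ?].
Qed.

Lemma Aj_full : Aj n = setT.
Proof.
have [_ H2 _ _ _] := inv (leqnn n).
by apply/eqP; rewrite eqEcard subsetT cardsT H2 leqnn.
Qed.

Lemma charA k v : (1 <= k <= n.+1)%N ->
  ((auction c).2 v < k)%N = match v with inl _ => true | inr t => t \in Aj k.-1 end.
Proof.
move=> Hk; rewrite auction_st /=.
have [_ _ _ _ [H5 H6 _]] := inv (leqnn n).
case: v => [r|t]; first by rewrite H5; lia.
have Ht : t \in Aj n by rewrite Aj_full inE.
have [_ H] := H6 t Ht.
case: k Hk => // k Hk /=; rewrite ltnS H //; lia.
Qed.

Lemma charW i : (i < n)%N -> winner c (Aj i) = Some (win c i.+1).
Proof.
move=> Hi; rewrite /win auction_st /=.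
by have [_ _ _ H4 _] := inv (leqnn n); apply: H4.
Qed.

Lemma charCov i v : (i < n)%N -> v \in win c i.+1 ->
  match v with inl _ => true | inr t => t \in Aj i.+1 end.
Proof.
move=> Hi; rewrite /win auction_st /=.
by have [_ _ _ _ [_ _ H7]] := inv (leqnn n); apply: H7.
Qed.

Lemma edge2 (f : {set V}) x y : edge f -> x \in f -> y \in f -> x != y -> f = [set x; y].
Proof.
move=> /eqP Hf Hx Hy Hxy; apply/eqP; rewrite eq_sym eqEcard cards2 Hxy Hf leqnn andbT.
by apply/subsetP => z; rewrite !inE => /orP [/eqP->|/eqP->].
Qed.

Lemma cand_inB k f : (1 <= k <= n)%N ->
  candidate (Aj k.-1) f = edge f && inB c f k.
Proof.
move=> Hk; have Hk' : (1 <= k <= n.+1)%N by lia.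
apply/idP/idP.
- move=> Hf; rewrite (cand_edge Hf) /=.
  have [s [t [Df Ht Hs]]] := cand_dec Hf.
  apply/existsP; exists s; rewrite Df !inE eqxx /=.
  apply/existsP; exists (inr t); rewrite !inE eqxx orbT /=.
  have Has : ((auction c).2 s < k)%N by rewrite charA //; case: s Hs {Df}.
  have Hat : (k <= (auction c).2 (inr t))%N by rewrite leqNgt charA.
  have -> : s != inr t.
    by case: s Hs {Df Has} => // t' Ht'; apply/negP => /eqP [Heq]; move: Ht; rewrite -Heq Ht'.
  move: Has Hat; set x := (auction c).2 s; set y := (auction c).2 (inr t) => *.
  apply/andP; split; lia.
case/andP => Hed /existsP [x /andP [Hx /existsP [y /andP [Hy /andP [Hxy Hb]]]]].
have H : forall x y, x \in f -> y \in f -> x != y ->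
    ((auction c).2 x < k)%N -> (k <= (auction c).2 y)%N -> candidate (Aj k.-1) f.
  move=> {x y Hx Hy Hxy Hb} x y Hx Hy Hxy Hax Hay.
  have := Hax; rewrite charA // => Hx'.
  move: Hay; rewrite leqNgt charA //.
  case: y Hy Hxy => [r|t] Hy Hxy //= Ht.
  rewrite (edge2 Hed Hx Hy Hxy) /candidate /edge cards2 Hxy /=.
  apply/existsP; exists x; apply/existsP; exists t; rewrite eqxx Ht /=.
  by case: x {Hx Hxy Hax} Hx'.
move: Hb; case: (ltnP ((auction c).2 x) k) => Hax Hb.
  by apply: (H x y) => //; lia.
apply: (H y x) => //; first by rewrite eq_sym. all: lia.
Qed.

Lemma win_inj k k' : (1 <= k <= n)%N -> (1 <= k' <= n)%N -> win c k = win c k' -> k = k'.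
Proof.
have H : forall k k', (1 <= k <= n)%N -> (1 <= k' <= n)%N -> (k < k')%N -> win c k != win c k'.
  move=> {k k'} k k' Hk Hk' Hlt; apply/eqP => Heq.
  have Hi' : (k'.-1 < n)%N by lia.
  have := charW Hi'; rewrite prednK; last by lia.
  move=> /winnerP [/cand_task [t [Htw HtA]]] _.
  have Hi : (k.-1 < n)%N by lia.
  have Htk : inr t \in win c k.-1.+1 by rewrite prednK; [rewrite Heq | lia].
  move: (charCov Hi Htk) => /=; rewrite prednK; last by lia.
  move=> Hin; move: HtA; rewrite (subsetP (Aj_sub (_ : k <= k'.-1)%N)) //; lia.
move=> Hk Hk' Heq; case: (ltngtP k k') => // Hlt.
  by move: (H k k' Hk Hk' Hlt); rewrite Heq eqxx.
by move: (H k' k Hk' Hk Hlt); rewrite Heq eqxx.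
Qed.

End Aux.

Lemma stepS_ext (R : realType) (Rb Tk : finType) (c c' : {set (Rb + Tk)%type} -> \bar R)
  (s : state Rb Tk) : winner c s.1.1.2 = winner c' s.1.1.2 -> stepS c s = stepS c' s.
Proof. by case: s => [[[k A] a] W] /= H; rewrite /stepS H. Qed.

Lemma auction_ext (R : realType) (Rb Tk : finType) (c c' : {set (Rb + Tk)%type} -> \bar R) :
  (forall j, (j < #|Tk|)%N -> winner c (Aj c j) = winner c' (Aj c j)) ->
  auction c = auction c'.
Proof.
move=> H.
have E : forall j, (j <= #|Tk|)%N -> st c j = st c' j.
  elim => // j IH Hj.
  rewrite /st !iterS -/(st c j) -/(st c' j) -IH; last by lia.
  by apply: stepS_ext; apply: H.
by rewrite !auction_st E.
Qed.

Theorem lemma7 (R : realType) (Rb Tk : finType)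
  (hR : (0 < #|Rb|)%N) (h3 : (3 <= #|Rb| + #|Tk|)%N)
  (c c' : {set (Rb + Tk)%type} -> \bar R)
  (hc0 : forall f, edge f -> 0 <= c f)
  (hc'0 : forall f, edge f -> 0 <= c' f)
  (hinj : forall f g, edge f -> edge g -> f != g -> c f != c g)
  (hinj' : forall f g, edge f -> edge g -> f != g -> c' f != c' g)
  (K : nat) (hK : (1 <= K <= #|Tk|)%N)
  (e : {set (Rb + Tk)%type}) (he : e = win c K)
  (hcc' : forall f, edge f -> f != e -> c' f = c f)
  (u : {set (Rb + Tk)%type}) (hu : second_best c K u) :
  auction c = auction c' <->
  (if [exists k : 'I_#|Tk|.+1, (k != K :> nat) && inB c e k]
   then (c' e < c u) /\
        (\big[maxe/0%:E]_(k < #|Tk|.+1 | (k != K :> nat) && inB c e k)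
            c (win c k) < c' e)
   else (c' e < c u) /\ (0 <= c' e)).
Proof.
have hK1 : (K.-1 < #|Tk|)%N by lia.
have HKK : K.-1.+1 = K by lia.
have HeW : winner c (Aj c K.-1) = Some e by rewrite (charW c hR hK1) HKK he.
have [HeC HeMin] := winnerP HeW.
have Hee : edge e := cand_edge HeC.
case: hu => Hue Hune HuB Humin.
have HuC : candidate (Aj c K.-1) u by rewrite (cand_inB c hR) // Hue HuB.
have Hune' : u != e by rewrite he.
have HPk : forall k : 'I_#|Tk|.+1, (k != K :> nat) && inB c e k ->
    (1 <= k <= #|Tk|)%N /\ (k != K :> nat).
  move=> k /andP [HkK HB]; split => //.
  move: HB => /existsP [x /andP [_ /existsP [y /andP [_ /andP [_ HB]]]]].
  have := ltn_ord k; lia.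
have Hdist : forall k, (1 <= k <= #|Tk|)%N -> k != K -> win c k != e.
  move=> k Hk HkK; apply/eqP => Hw; move/eqP: HkK; apply.
  by apply: (@win_inj _ _ _ c hR _ _ Hk hK); rewrite Hw he.
have HwE : forall k, (1 <= k <= #|Tk|)%N -> edge (win c k).
  move=> k Hk; have Hk1 : (k.-1 < #|Tk|)%N by lia.
  have := charW c hR Hk1; rewrite prednK; last by lia.
  by move=> /winnerP [/cand_edge].
split=> [Heq|H].
- have EA : forall j, (j <= #|Tk|)%N -> Aj c' j = Aj c j.
    move=> j Hj; apply/setP => t.
    have Hj' : (0 < j.+1 <= #|Tk|.+1)%N by lia.
    move: (charA c hR (inr t) Hj') (charA c' hR (inr t) Hj'); rewrite Heq /= => E1 E2.
    by rewrite -E1 -E2.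
  have HW' : forall k, (1 <= k <= #|Tk|)%N -> winner c' (Aj c k.-1) = Some (win c k).
    move=> k Hk; have Hk1 : (k.-1 < #|Tk|)%N by lia.
    rewrite -EA; last by lia.
    rewrite (charW c' hR Hk1) prednK; last by lia.
    by rewrite /win Heq.
  have Hlt1 : c' e < c u.
    have := HW' K hK; rewrite -he => /winnerP [_ Hm].
    have := Hm u HuC; rewrite (hcc' _ Hue Hune') => Hle.
    rewrite lt_neqAle Hle andbT.
    have Heu : e != u by rewrite eq_sym Hune'.
    have := hinj' e u Hee Hue Heu; by rewrite (hcc' _ Hue Hune').
  have Hklt : forall k : 'I_#|Tk|.+1, (k != K :> nat) && inB c e k -> c (win c k) < c' e.
    move=> k Hk; have [Hk1 Hk2] := HPk k Hk.
    have eC : candidate (Aj c k.-1) e by rewrite (cand_inB c hR) // Hee; case/andP: Hk.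
    have [Hwc Hwm] := winnerP (HW' k Hk1).
    have Hd := Hdist k Hk1 Hk2.
    rewrite -(hcc' _ (cand_edge Hwc) Hd) lt_neqAle (Hwm e eC) andbT.
    exact: hinj' (cand_edge Hwc) Hee Hd.
  case: ifP => Hex; last by split => //; apply: hc'0.
  split => //; apply/bigmax_ltP; split; last exact: Hklt.
  case/existsP: Hex => k Hk; have [Hk1 _] := HPk k Hk.
  exact: le_lt_trans (hc0 _ (HwE k Hk1)) (Hklt k Hk).
- have [Hlt1 Hmax] : c' e < c u /\
      forall k : 'I_#|Tk|.+1, (k != K :> nat) && inB c e k -> c (win c k) < c' e.
    move: H; case: ifP => Hex.
      by case=> H1 /bigmax_ltP [_ H2]; split.
    move=> [H1 _]; split => // k Hk; exfalso.
    by move/negbT: Hex => /existsPn /(_ k); rewrite Hk.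
  apply: auction_ext => j Hj.
  have Hk : (1 <= j.+1 <= #|Tk|)%N by lia.
  have HW := charW c hR Hj; have [HwC Hwm] := winnerP HW.
  rewrite HW; apply/esym/(winner_uniq hinj') => // f Hf.
  have Hf' : candidate (Aj c j.+1.-1) f := Hf.
  rewrite (cand_inB c hR) // in Hf'; case/andP: Hf' => Hfe' HfB.
  case: (eqVneq (win c j.+1) e) => Hwe.
    have HjK : j.+1 = K by apply: (@win_inj _ _ _ c hR _ _ Hk hK); rewrite Hwe he.
    rewrite Hwe; case: (eqVneq f e) => [->|Hfe]; first exact: lexx.
    rewrite (hcc' _ Hfe' Hfe); apply: ltW; apply: (lt_le_trans Hlt1).
    apply: Humin => //; first by rewrite -he.
    by rewrite -HjK.
  rewrite (hcc' _ (cand_edge HwC) Hwe); case: (eqVneq f e) HfB => [->|Hfe] HfB.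
    apply: ltW; have Hjn : (j.+1 < #|Tk|.+1)%N by lia.
    apply: (Hmax (Ordinal Hjn)) => /=; apply/andP; split => //.
    by apply/eqP => E; move/eqP: Hwe; apply; rewrite E -he.
  rewrite (hcc' _ Hfe' Hfe); exact: Hwm.
Qed.
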